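(* Let $a,b,c\in\mathbb{Z}$ with $a,b$ odd, $c\equiv2\pmod4$, and $ab(a+b)c$ a nonzero perfect square. If the equation $ax^2+by^2=cz^2$ is partition regular with respect to $x,y$, then $ab\equiv1\pmod 8$.
   Context: The equation $ax^2+by^2=cz^2$ is partition regular with respect to $x,y$ if for every finite coloring of $\mathbb{N}=\{1,2,\dots\}$ there exist distinct $x,y\in\mathbb{N}$ of the same color and $z\in\mathbb{N}$ with $ax^2+by^2=cz^2$. A perfect square is $k^2$, $k\in\mathbb{Z}$. *)

(* Defs.v *)
From Stdlib Require Import ZArith.
Open Scope Z_scope.

Definition is_square (n : Z) : Prop := exists k : Z, n = k * k.

(* N = {1,2,...} is represented by the positive integers.  A finite coloring
   of N is a map col from N into {0,...,r-1} for some r; col is only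
   constrained on positive integers. *)
Definition partition_regular_xy (a b c : Z) : Prop :=
  forall (r : nat) (col : Z -> nat),
    (forall n : Z, 0 < n -> (col n < r)%nat) ->
    exists x y z : Z,
      0 < x /\ 0 < y /\ 0 < z /\ x <> y /\ col x = col y /\
      a * x ^ 2 + b * y ^ 2 = c * z ^ 2.

(* Main.v *)
Require Import Defs.
From Stdlib Require Import ZArith Lia.
Open Scope Z_scope.

Lemma oddE (X : Z) : Z.odd X = true -> exists j, X = 2*j+1.
Proof. intro H. apply Z.odd_spec in H. destruct H as [j Hj]. exists j; lia. Qed.

Lemma parity (X : Z) : (exists j, X = 2*j) \/ (exists j, X = 2*j+1).
Proof. destruct (Z.Even_or_Odd X) as [[j Hj]|[j Hj]]; [left|right]; exists j; lia. Qed.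

Lemma sq_odd (X : Z) : (exists j, X = 2*j+1) -> exists s, X*X = 8*s+1.
Proof.
  intros [j ->]. destruct (parity j) as [[m ->]|[m ->]].
  - exists (2*m*m+m). ring.
  - exists (2*m*m+3*m+1). ring.
Qed.

Lemma pow_SSS (n : nat) : 2 ^ Z.of_nat (S (S (S n))) = 8 * 2 ^ Z.of_nat n.
Proof. rewrite !Nat2Z.inj_succ, !Z.pow_succ_r by lia. ring. Qed.

Lemma pow_SS (n : nat) : 2 ^ Z.of_nat (S (S n)) = 4 * 2 ^ Z.of_nat n.
Proof. rewrite !Nat2Z.inj_succ, !Z.pow_succ_r by lia. ring. Qed.

Lemma keyL (n : nat) : forall q X Y u, (exists t, q = 2*t+1) -> (exists t, u = 2*t+1) ->
  Y <> 0 -> 8*(Y*Y) < 2 ^ Z.of_nat n ->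
  (exists t, X*X - q*(Y*Y)*(u*u) = 2 ^ Z.of_nat n * t) -> q mod 8 = 1.
Proof.
  induction n as [n IH] using (well_founded_induction lt_wf).
  intros q X Y u [tq Hq] [tu Hu] HY Hlt [t Ht].
  assert (HYY : Y*Y > 0) by (destruct (Z_lt_le_dec Y 0); [pose proof (Z.mul_neg_neg Y Y); lia | pose proof (Z.mul_pos_pos Y Y); lia]).
  destruct (parity Y) as [[y Hy]|[y Hy]].
  -
    destruct n as [|[|n]].
    + simpl Z.of_nat in Hlt. rewrite Z.pow_0_r in Hlt || (rewrite Z.pow_1_r in Hlt) || (change (2^2) with 4 in Hlt) || (change (2^3) with 8 in Hlt). lia.
    + simpl Z.of_nat in Hlt. rewrite Z.pow_0_r in Hlt || (rewrite Z.pow_1_r in Hlt) || (change (2^2) with 4 in Hlt) || (change (2^3) with 8 in Hlt). lia.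
    + rewrite pow_SS in Hlt, Ht.
      destruct (parity X) as [[x Hx]|Hx].
      * apply (IH n ltac:(lia) q x y u); [exists tq; auto|exists tu; auto|lia| |].
        -- subst Y. nia.
        -- exists t.
           assert (E : X*X - q*(Y*Y)*(u*u) = 4*(x*x - q*(y*y)*(u*u))) by (subst; ring).
           rewrite E in Ht. set (P := 2 ^ Z.of_nat n) in *. nia.
      * exfalso. destruct (sq_odd X Hx) as [s Hs].
        assert (E : X*X - q*(Y*Y)*(u*u) = 8*s+1 - 4*(q*(y*y)*(u*u))) by (rewrite Hs; subst Y; ring).
        rewrite E in Ht. lia.
  -
    destruct n as [|[|[|n]]].
    + simpl Z.of_nat in Hlt. rewrite Z.pow_0_r in Hlt || (rewrite Z.pow_1_r in Hlt) || (change (2^2) with 4 in Hlt) || (change (2^3) with 8 in Hlt). lia.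
    + simpl Z.of_nat in Hlt. rewrite Z.pow_0_r in Hlt || (rewrite Z.pow_1_r in Hlt) || (change (2^2) with 4 in Hlt) || (change (2^3) with 8 in Hlt). lia.
    + simpl Z.of_nat in Hlt. rewrite Z.pow_0_r in Hlt || (rewrite Z.pow_1_r in Hlt) || (change (2^2) with 4 in Hlt) || (change (2^3) with 8 in Hlt). lia.
    + rewrite pow_SSS in Ht.
      destruct (sq_odd (Y*u)) as [s Hs].
      { exists (2*y*tu + y + tu). subst; ring. }
      assert (E : q*(Y*Y)*(u*u) = q*(8*s+1)) by (rewrite <- Hs; ring).
      rewrite E in Ht.
      destruct (parity X) as [[x Hx]|Hx].
      * exfalso. subst X. assert (E2 : 2*x*(2*x) = 4*(x*x)) by ring. rewrite E2 in Ht.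
        subst q. lia.
      * destruct (sq_odd X Hx) as [s' Hs']. rewrite Hs' in Ht. assert (E3 : q*(8*s+1) = 8*(q*s)+q) by ring. rewrite E3 in Ht. set (P := 2 ^ Z.of_nat n) in *. set (w := q*s) in *. assert (E4 : 8*P*t = 8*(P*t)) by ring. rewrite E4 in Ht. clearbody P w. clear -Ht. assert (Hq8 : q = 1 + (s' - w - P*t)*8) by lia. rewrite Hq8, Z.mod_add by lia. reflexivity.
Qed.

Fixpoint podd (p : positive) : positive :=
  match p with xO q => podd q | _ => p end.

Lemma podd_spec (p : positive) :
  ((exists j, Zpos p = 2*j+1) /\ podd p = p) \/ (exists p', p = xO p').
Proof.
  destruct p as [p|p|].
  - left. split; [exists (Zpos p); lia | reflexivity].
  - right. exists p; reflexivity.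
  - left. split; [exists 0; lia | reflexivity].
Qed.

Lemma mainL (a b c q D k P u w z m : Z) :
  q = a*b -> D = a+b -> (exists t, u = 2*t+1) -> (exists t, w = 2*t+1) ->
  w - u = P * m -> q*D*c = k*k ->
  a*(u*u) + b*(w*w) = c*(z*z) ->
  exists t, (k*z)*(k*z) - q*(D*D)*(u*u) = (2*P)*t.
Proof.
  intros Hq HD [t1 Hu] [t2 Hw] Hm Hk He.
  exists (q*D*b*m*(t1+t2+1)).
  transitivity (q*D*(c*(z*z)) - q*(D*D)*(u*u)).
  { replace (q*D*(c*(z*z))) with (q*D*c*(z*z)) by ring. rewrite Hk. ring. }
  rewrite <- He. subst D.
  transitivity (q*(a+b)*b*(w-u)*(w+u)). { ring. }
  rewrite Hm, Hu, Hw. ring.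
Qed.

Lemma mixed (a b c e X Y z : Z) : (exists t, a = 2*t+1) -> c = 4*e+2 ->
  (exists i, X = 2*i+1) -> (exists j, Y = 2*j) -> a*(X*X)+b*(Y*Y) = c*(z*z) -> False.
Proof.
  intros [t Ha] Hc [i Hi] [j Hj] He. subst.
  assert (E1 : (2*t+1)*((2*i+1)*(2*i+1)) + b*(2*j*(2*j))
      = 2*(4*t*i*i + 4*t*i + t + 2*i*i + 2*i + b*2*j*j) + 1) by ring.
  assert (E2 : (4*e+2)*(z*z) = 2*((2*e+1)*(z*z))) by ring.
  lia.
Qed.

Lemma descent (a b c k P : Z) (M : nat) (Ha : exists t, a = 2*t+1) (Hb : exists t, b = 2*t+1)
  (Hc : exists e, c = 4*e+2) (Hk : a*b*(a+b)*c = k*k) (HD : a+b <> 0)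
  (Hlt : 8*((a+b)*(a+b)) < 2 ^ Z.of_nat M) (HP : 0 < P) (HM : 2*P = 2 ^ Z.of_nat M) (n : nat) :
  forall p1 p2 z, Zpos p1 + Zpos p2 <= Z.of_nat n ->
  Zpos (podd p1) mod P = Zpos (podd p2) mod P ->
  a*(Zpos p1)^2 + b*(Zpos p2)^2 = c*z^2 -> (a*b) mod 8 = 1.
Proof.
  induction n as [|n IH]; intros p1 p2 z Hn Hmod He.
  { pose proof (Pos2Z.is_pos p1); pose proof (Pos2Z.is_pos p2); lia. }
  rewrite !Z.pow_2_r in He.
  destruct Ha as [ta Ha], Hb as [tb Hb], Hc as [e Hc].
  destruct (podd_spec p1) as [[Ho1 Hp1]|[p1' ->]];
  destruct (podd_spec p2) as [[Ho2 Hp2]|[p2' ->]].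
  - rewrite Hp1, Hp2 in Hmod.
    assert (Hm : Zpos p2 - Zpos p1 = P * (Zpos p2 / P - Zpos p1 / P)).
    { rewrite (Z.div_mod (Zpos p1) P) at 1 by lia.
      rewrite (Z.div_mod (Zpos p2) P) at 1 by lia. rewrite Hmod. ring. }
    destruct (mainL a b c (a*b) (a+b) k P (Zpos p1) (Zpos p2) z _ eq_refl eq_refl Ho1 Ho2 Hm Hk He)
      as [t Ht].
    apply (keyL M (a*b) (k*z) (a+b) (Zpos p1)); auto.
    + exists (2*ta*tb+ta+tb). subst; ring.
    + exists t. rewrite <- HM. exact Ht.
  - exfalso. apply (mixed a b c e (Zpos p1) (Zpos p2'~0) z); auto.
    + exists ta; auto.
    + exists (Zpos p2'); apply Pos2Z.inj_xO.
  - exfalso. apply (mixed b a c e (Zpos p2) (Zpos p1'~0) z); auto.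
    + exists tb; auto.
    + exists (Zpos p1'); apply Pos2Z.inj_xO.
    + rewrite <- He. ring.
  - rewrite (Pos2Z.inj_xO p1'), (Pos2Z.inj_xO p2') in He, Hn. change (Zpos (podd p1') mod P = Zpos (podd p2') mod P) in Hmod.
    pose proof (Pos2Z.is_pos p1'); pose proof (Pos2Z.is_pos p2').
    destruct (parity z) as [[s Hs]|[s Hs]].
    + apply (IH p1' p2' s); [clear -Hn H H0; lia|exact Hmod|].
      rewrite !Z.pow_2_r. subst z.
      assert (E : 4*(a*(Zpos p1'*Zpos p1') + b*(Zpos p2'*Zpos p2')) = 4*(c*(s*s))).
      { transitivity (a*(2*Zpos p1'*(2*Zpos p1')) + b*(2*Zpos p2'*(2*Zpos p2'))); [ring|].
        rewrite He. ring. }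
      clear -E. lia.
    + exfalso. subst z c.
      assert (E1 : a*(2*Zpos p1'*(2*Zpos p1')) + b*(2*Zpos p2'*(2*Zpos p2'))
        = 4*(a*Zpos p1'*Zpos p1' + b*Zpos p2'*Zpos p2')) by ring.
      assert (E2 : (4*e+2)*((2*s+1)*(2*s+1)) = 4*(4*e*s*s + 4*e*s + e + 2*s*s + 2*s) + 2) by ring.
      rewrite E1, E2 in He. clear -He. lia.
Qed.

Definition colP (P : Z) (n : Z) : nat :=
  match n with Zpos p => Z.to_nat (Zpos (podd p) mod P) | _ => 0%nat end.

Theorem propositionP (a b c : Z) :
  Z.odd a = true -> Z.odd b = true -> c mod 4 = 2 ->
  a * b * (a + b) * c <> 0 -> is_square (a * b * (a + b) * c) ->
  partition_regular_xy a b c ->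
  (a * b) mod 8 = 1.
Proof.
  intros Ha Hb Hc Hne [k Hk] HPR.
  assert (HD : a + b <> 0).
  { intro HD0. apply Hne. rewrite HD0. ring. }
  assert (Hc' : exists e, c = 4*e+2).
  { exists (c/4). pose proof (Z.div_mod c 4 ltac:(lia)). lia. }
  set (N := 8*((a+b)*(a+b))).
  assert (HN : 0 <= N) by (unfold N; nia).
  set (P := 2 ^ N).
  assert (HNP : N < P) by (apply Z.pow_gt_lin_r; lia).
  assert (HP : 0 < P) by lia.
  set (M := Z.to_nat (N+1)).
  assert (HM : 2*P = 2 ^ Z.of_nat M).
  { unfold M. rewrite Z2Nat.id by lia. rewrite Z.pow_add_r by lia. unfold P. ring. }
  destruct (HPR (Z.to_nat P) (colP P)) as (x & y & z & Hx & Hy & Hz & Hxy & Hcol & He).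
  { intros n Hn. destruct n as [|p|p]; try lia. simpl.
    pose proof (Z.mod_pos_bound (Zpos (podd p)) P HP). apply Z2Nat.inj_lt; lia. }
  destruct x as [|p1|p1]; try lia. destruct y as [|p2|p2]; try lia.
  apply (descent a b c k P M (oddE a Ha) (oddE b Hb) Hc' Hk HD) with
    (n := Z.to_nat (Zpos p1 + Zpos p2)) (p1 := p1) (p2 := p2) (z := z); auto.
  - rewrite <- HM. lia.
  - lia.
  - simpl in Hcol. pose proof (Z.mod_pos_bound (Zpos (podd p1)) P HP).
    pose proof (Z.mod_pos_bound (Zpos (podd p2)) P HP).
    apply Z2Nat.inj; lia.
Qed.
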